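(* Let $K_{\Delta p},K_{\Delta v},\lambda_1,\lambda_2,\gamma_{\Delta p},\gamma_{\Delta v}>0$ and $a,b\ge0$. For each $N\in\mathbb{N}$ consider states $\tilde\chi_i=(x_{1,i},x_{2,i},x_{3,i},x_{4,i})\in\mathbb{R}^4$, $i=0,\dots,N$, with $g_i:=a\psi^{i-1}_{\Delta p}+b\psi^{i-1}_{\Delta v}$ and dynamics $$\begin{aligned}\dot x_{1,i}&=x_{2,i},\\ \dot x_{2,i}&=-(x_{1,i}+x_{3,i})-K_{\Delta v}\big(x_{2,i}-\lambda_1x_{3,i}+x_{4,i}+K_{\Delta p}(x_{1,i}+x_{3,i})\big)+(K_{\Delta p}-\lambda_1)(\lambda_1x_{3,i}-x_{4,i})+\lambda_2x_{4,i}-K_{\Delta p}x_{2,i}-g_i,\\ \dot x_{3,i}&=-\lambda_1x_{3,i}+x_{4,i},\\ \dot x_{4,i}&=-\lambda_2x_{4,i}+g_i,\end{aligned}$$ where $\psi^{-1}_{\Delta p}=\psi^{-1}_{\Delta v}=0$ and, for $i\ge1$, with $m=i-1$, $$\psi^{m}_{\Delta p}=\gamma_{\Delta p}\,\mathrm{sign}\Big(\tfrac{1}{m+1}\textstyle\sum_{j=0}^{m}x_{1,j}\Big)\sqrt{\sigma^2_{1,m}},\qquad \psi^{m}_{\Delta v}=\gamma_{\Delta v}\,\mathrm{sign}\Big(\tfrac{1}{m+1}\textstyle\sum_{j=0}^{m}x_{2,j}\Big)\sqrt{\sigma^2_{2,m}},$$ $\sigma^2_{k,m}$ being the population variance of $x_{k,0},\dots,x_{k,m}$.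 (Here $x_{1,i}=\Delta p_i+\Delta\bar p$, $x_{2,i}=\Delta v_i$, $(x_{3,i},x_{4,i})=(\rho_{1,i},\rho_{2,i})$; this is the closed loop of the variable-spacing policy with reference distance $\Delta p^r_i=-\Delta\bar p-\rho_{1,i}$ and reference speed difference $\Delta v^r_i=\lambda_1\rho_{1,i}-\rho_{2,i}-K_{\Delta p}(\Delta p_i-\Delta p^r_i)$.) Assume solutions exist on $[0,\infty)$. Then: (1) the origin of each isolated subsystem (with $g_i$ replaced by $0$) is globally exponentially stable; (2) there exist $\beta^{vp}\in\mathcal{KL}$ and $\tilde\gamma^{vp}>0$ such that for every $N$, every solution, every $i$ and all $t\ge0$, $$|\tilde\chi_i(t)|\le\beta^{vp}(|\tilde\chi_i(0)|,t)+\tilde\gamma^{vp}\max_{j=0,\dots,i-1}\sup_{0\le\tau\le t}|\tilde\chi_j(\tau)|;$$ (3) there exist $a,b\ge0$ (not both zero) for which this holds with $\tilde\gamma^{vp}\in(0,1)$, and for such $a,b$ the origin of the interconnected system is Asymptotically String Stable.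
   Context: $|\cdot|$ is the Euclidean norm; $\mathrm{sign}$ takes values in $\{-1,0,1\}$. String Stability of the origin means: for every $\epsilon>0$ there exists $\delta>0$ such that for all $N\in\mathbb{N}$ and every solution, $\max_{i=0,\dots,N}|\tilde\chi_i(0)|<\delta$ implies $\max_{i=0,\dots,N}|\tilde\chi_i(t)|<\epsilon$ for all $t\ge0$. Asymptotic String Stability means String Stability together with: for all $N$, every solution satisfies $\lim_{t\to\infty}|\tilde\chi_i(t)|=0$ for all $i=0,\dots,N$. *)

(* Defs.v *)
From Stdlib Require Import Reals Lra.
From Coquelicot Require Import Coquelicot.
Open Scope R_scope.

Definition sgn (x : R) : R :=
  if Rlt_dec 0 x then 1 else if Rlt_dec x 0 then -1 else 0.

Definition mean (f : nat -> R) (m : nat) : R := sum_f_R0 f m / INR (m + 1).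
Definition pvar (f : nat -> R) (m : nat) : R :=
  sum_f_R0 (fun j => (f j - mean f m) ^ 2) m / INR (m + 1).

Definition psi (gam : R) (f : nat -> R) (m : nat) : R :=
  gam * sgn (mean f m) * sqrt (pvar f m).

Definition gterm (a b gdp gdv : R) (x1 x2 : nat -> R -> R) (i : nat) (t : R) : R :=
  match i with
  | O => 0
  | S m => a * psi gdp (fun j => x1 j t) m + b * psi gdv (fun j => x2 j t) m
  end.

Definition rhs2 (Kdp Kdv l1 l2 x1 x2 x3 x4 g : R) : R :=
  - (x1 + x3) - Kdv * (x2 - l1 * x3 + x4 + Kdp * (x1 + x3))
  + (Kdp - l1) * (l1 * x3 - x4) + l2 * x4 - Kdp * x2 - g.

Definition norm4 (y1 y2 y3 y4 : R) : R := sqrt (y1 ^ 2 + y2 ^ 2 + y3 ^ 2 + y4 ^ 2).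

Definition cont_nonneg (f : R -> R) : Prop :=
  forall t, 0 <= t ->
    filterlim f (within (fun s => 0 <= s) (locally t)) (locally (f t)).

Definition sol_on (f df : R -> R) : Prop :=
  cont_nonneg f /\ forall t, 0 < t -> is_derive f t (df t).

Definition isolated_sol (Kdp Kdv l1 l2 : R) (z1 z2 z3 z4 : R -> R) : Prop :=
  sol_on z1 z2 /\
  sol_on z2 (fun t => rhs2 Kdp Kdv l1 l2 (z1 t) (z2 t) (z3 t) (z4 t) 0) /\
  sol_on z3 (fun t => - l1 * z3 t + z4 t) /\
  sol_on z4 (fun t => - l2 * z4 t).

Definition platoon_sol (Kdp Kdv l1 l2 gdp gdv a b : R) (N : nat)
    (x1 x2 x3 x4 : nat -> R -> R) : Prop :=
  forall i, (i <= N)%nat ->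
    let g := gterm a b gdp gdv x1 x2 i in
    sol_on (x1 i) (x2 i) /\
    sol_on (x2 i) (fun t => rhs2 Kdp Kdv l1 l2 (x1 i t) (x2 i t) (x3 i t) (x4 i t) (g t)) /\
    sol_on (x3 i) (fun t => - l1 * x3 i t + x4 i t) /\
    sol_on (x4 i) (fun t => - l2 * x4 i t + g t).

Definition classK (al : R -> R) : Prop :=
  al 0 = 0 /\ cont_nonneg al /\
  (forall r s, 0 <= r -> r < s -> al r < al s).

Definition classKL (be : R -> R -> R) : Prop :=
  (forall t, 0 <= t -> classK (fun r => be r t)) /\
  (forall r, 0 <= r ->
     (forall s t, 0 <= s -> s <= t -> be r t <= be r s) /\
     is_lim (fun t => be r t) p_infty 0).

Definition isolated_GES (Kdp Kdv l1 l2 : R) : Prop :=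
  exists k lam, 0 < k /\ 0 < lam /\
    forall z1 z2 z3 z4, isolated_sol Kdp Kdv l1 l2 z1 z2 z3 z4 ->
    forall t, 0 <= t ->
      norm4 (z1 t) (z2 t) (z3 t) (z4 t)
      <= k * norm4 (z1 0) (z2 0) (z3 0) (z4 0) * exp (- lam * t).

(* The ISS-like estimate
     |chi_i(t)| <= beta(|chi_i(0)|, t) + gam * max_{j<i} sup_{[0,t]} |chi_j|,
   with the max over an empty index set equal to 0; the right-hand quantity
   "max sup" is expressed through its defining property: the estimate holds with
   any M >= 0 bounding all |chi_j(tau)|, j < i, 0 <= tau <= t. *)
Definition iss_estimate (Kdp Kdv l1 l2 gdp gdv a b : R) (Ggam : R -> Prop) : Prop :=
  exists (be : R -> R -> R) (gam : R), classKL be /\ Ggam gam /\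
    forall (N : nat) (x1 x2 x3 x4 : nat -> R -> R),
      platoon_sol Kdp Kdv l1 l2 gdp gdv a b N x1 x2 x3 x4 ->
      forall i, (i <= N)%nat -> forall t, 0 <= t ->
      forall M, 0 <= M ->
        (forall j tau, (j < i)%nat -> 0 <= tau -> tau <= t ->
           norm4 (x1 j tau) (x2 j tau) (x3 j tau) (x4 j tau) <= M) ->
        norm4 (x1 i t) (x2 i t) (x3 i t) (x4 i t)
        <= be (norm4 (x1 i 0) (x2 i 0) (x3 i 0) (x4 i 0)) t + gam * M.

Definition string_stable (Kdp Kdv l1 l2 gdp gdv a b : R) : Prop :=
  forall eps, 0 < eps -> exists delta, 0 < delta /\
    forall (N : nat) (x1 x2 x3 x4 : nat -> R -> R),
      platoon_sol Kdp Kdv l1 l2 gdp gdv a b N x1 x2 x3 x4 ->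
      (forall i, (i <= N)%nat -> norm4 (x1 i 0) (x2 i 0) (x3 i 0) (x4 i 0) < delta) ->
      forall i, (i <= N)%nat -> forall t, 0 <= t ->
        norm4 (x1 i t) (x2 i t) (x3 i t) (x4 i t) < eps.

Definition asympt_string_stable (Kdp Kdv l1 l2 gdp gdv a b : R) : Prop :=
  string_stable Kdp Kdv l1 l2 gdp gdv a b /\
  forall (N : nat) (x1 x2 x3 x4 : nat -> R -> R),
    platoon_sol Kdp Kdv l1 l2 gdp gdv a b N x1 x2 x3 x4 ->
    forall i, (i <= N)%nat ->
      is_lim (fun t => norm4 (x1 i t) (x2 i t) (x3 i t) (x4 i t)) p_infty 0.

(* Main.v *)
Require Import Defs.
From Stdlib Require Import Reals Lra Psatz FunctionalExtensionality.
From Coquelicot Require Import Coquelicot.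
Open Scope R_scope.

Definition cw (f : R -> R) (t : R) : Prop :=
  filterlim f (within (fun s => 0 <= s) (locally t)) (locally (f t)).

Lemma cw_cont f t : continuous f t -> cw f t.
Proof. intro H. unfold cw. eapply filterlim_filter_le_1; [apply filter_le_within|exact H]. Qed.

Lemma cw_plus f g t : cw f t -> cw g t -> cw (fun s => f s + g s) t.
Proof.
  intros Hf Hg. unfold cw.
  eapply (filterlim_comp_2 f g Rplus). exact Hf. exact Hg.
  apply (filterlim_plus (f t) (g t)).
Qed.

Lemma cw_mult f g t : cw f t -> cw g t -> cw (fun s => f s * g s) t.
Proof.
  intros Hf Hg. unfold cw.
  eapply (filterlim_comp_2 f g Rmult). exact Hf. exact Hg.
  apply (filterlim_mult (f t) (g t)).
Qed.

Lemma cw_const c t : cw (fun _ => c) t.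
Proof. apply cw_cont. apply continuous_const. Qed.

Lemma cw_exp c t : cw (fun s => exp (c * s)) t.
Proof.
  apply cw_cont. apply continuity_pt_filterlim.
  apply (continuity_pt_comp (fun s => c * s) exp).
  - apply continuity_pt_mult. apply continuity_pt_const. intros a b; reflexivity. apply continuity_pt_id.
  - apply derivable_continuous_pt. apply derivable_pt_exp.
Qed.

Lemma mono (f df : R -> R) t : 0 <= t -> cw f 0 ->
  (forall s, 0 < s -> is_derive f s (df s)) ->
  (forall s, 0 < s <= t -> df s <= 0) -> f t <= f 0.
Proof.
  intros Ht Hc Hd Hneg.
  destruct (Req_dec t 0) as [->|Htn]; [lra|].
  assert (key : forall e, 0 < e <= t -> f t <= f e).
  { intros e He.
    destruct (Req_dec e t) as [->|Hne]; [lra|].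
    destruct (MVT_gen f e t df) as [c [Hc1 Hc2]].
    - intros x Hx. apply Hd. rewrite Rmin_left in Hx by lra. lra.
    - intros x Hx. rewrite Rmin_left in Hx by lra. apply continuity_pt_filterlim.
      apply (ex_derive_continuous (K:=R_AbsRing) (V:=R_NormedModule)). eexists. apply Hd. lra.
    - rewrite Rmin_left in Hc1 by lra. rewrite Rmax_right in Hc1 by lra.
      assert (df c <= 0) by (apply Hneg; lra). nra. }
  destruct (Rle_or_lt (f t) (f 0)) as [H|H]; [exact H|exfalso].
  unfold cw in Hc. pose proof (proj1 (@filterlim_locally _ _ _ (within_filter _ _ _ (@filter_filter _ _ (locally_filter (0:R)))) f (f 0)) Hc) as Hc0. clear Hc. rename Hc0 into Hc.
  destruct (Hc (mkposreal _ (proj2 (Rlt_0_minus _ _) H))) as [d Hd'].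
  set (s := Rmin (d/2) t).
  assert (Hs : 0 < s <= t). { unfold s. split. apply Rmin_glb_lt. destruct d; simpl; lra. lra. apply Rmin_r. }
  assert (Hb : ball 0 d s).
  { unfold s. unfold ball; simpl; unfold AbsRing_ball, abs, minus, plus, opp; simpl. 
    rewrite Rabs_pos_eq. assert (Rmin (d/2) t <= d/2) by apply Rmin_l. destruct d; simpl in *; lra.
    assert (0 < Rmin (d / 2) t) by (fold s; lra). lra. }
  specialize (Hd' s Hb ltac:(lra)). specialize (key s Hs).
  revert Hd'. unfold ball; simpl; unfold AbsRing_ball, abs, minus, plus, opp; simpl. intros Hd'.
  apply Rabs_lt_between in Hd'. lra.
Qed.

Lemma der_eq (f : R -> R) (x d d' : R) : is_derive f x d -> d = d' -> is_derive f x d'.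
Proof. intros H ->. exact H. Qed.

Lemma der_ext (f g : R -> R) (x d : R) : (forall s, f s = g s) -> is_derive f x d -> is_derive g x d.
Proof. intros. eapply is_derive_ext; eauto. Qed.

Lemma derive_exp_lin (l s : R) : is_derive (fun s => exp (l * s)) s (l * exp (l * s)).
Proof. apply (der_eq _ _ (l*1*exp(l*s))). auto_derive. exact I. reflexivity. rewrite Rmult_1_r; reflexivity. Qed.

Lemma der_mult (f g : R -> R) (x df dg : R) : is_derive f x df -> is_derive g x dg ->
  is_derive (fun s => f s * g s) x (df * g x + f x * dg).
Proof. intros H1 H2. exact (is_derive_mult f g x df dg H1 H2 (fun a b => Rmult_comm a b)). Qed.

Lemma der_plus (f g : R -> R) (x df dg : R) : is_derive f x df -> is_derive g x dg ->
  is_derive (fun s => f s + g s) x (df + dg).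
Proof. intros H1 H2. exact (is_derive_plus f g x df dg H1 H2). Qed.

Lemma der_const (c x : R) : is_derive (fun _ => c) x 0.
Proof. exact (@is_derive_const R_AbsRing R_NormedModule c x). Qed.

Lemma comp_lemma (y dy : R -> R) l G t : 0 < l -> 0 <= G -> 0 <= t -> cw y 0 ->
  (forall s, 0 < s -> is_derive y s (dy s)) ->
  (forall s, 0 < s <= t -> dy s <= - l * y s + G) ->
  y t <= y 0 * exp (- l * t) + G / l.
Proof.
  intros Hl HG Ht Hc Hd Hb.
  set (h := fun s => (y s + - (G / l)) * exp (l * s)).
  assert (Hm : h t <= h 0).
  { apply (mono h (fun s => (dy s + 0) * exp (l * s) + (y s + - (G/l)) * (l * exp (l * s)))); auto.
    - unfold h. apply cw_mult. apply cw_plus. exact Hc. apply cw_const. apply cw_exp.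
    - intros s Hs. unfold h.
      apply (der_mult (fun s => y s + - (G / l)) (fun s => exp (l * s))).
      + apply (der_plus y (fun _ => - (G / l))). auto. apply der_const.
      + apply derive_exp_lin.
    - intros s Hs. specialize (Hb s Hs). pose proof (exp_pos (l * s)).
      assert (E : (dy s + 0) * exp (l * s) + (y s + - (G / l)) * (l * exp (l * s))
                  = (dy s + l * y s - G) * exp (l * s)) by (field; lra).
      rewrite E. apply Rmult_le_0_r; lra. }
  unfold h in Hm. rewrite Rmult_0_r, exp_0, Rmult_1_r in Hm.
  assert (E2 : exp (- l * t) * exp (l * t) = 1).
  { rewrite <- exp_plus. replace (- l * t + l * t) with 0 by ring. apply exp_0. }
  pose proof (exp_pos (- l * t)). pose proof (exp_pos (l * t)).
  assert (y t + - (G / l) <= (y 0 + - (G / l)) * exp (- l * t)).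
  { apply (Rmult_le_reg_r (exp (l * t))). lra.
    replace ((y 0 + - (G / l)) * exp (- l * t) * exp (l * t)) with (y 0 + - (G / l)).
    lra. rewrite Rmult_assoc, E2. ring. }
  assert (0 <= G / l) by (apply Rdiv_le_0_compat; lra). nra.
Qed.
Lemma lyap_ineq Kdp Kdv l1 l2 mu al e f x3 x4 g :
  0 < Kdp -> 0 < Kdv -> 0 < l1 -> 0 < l2 -> 0 < mu ->
  mu <= Kdp -> mu <= Kdv -> mu <= l1 -> mu <= l2 / 2 ->
  al = 1 + 2 / (l1 * l2) ->
  -2*Kdp*e^2 - 2*Kdv*f^2 - 2*l1*x3^2 + 2*x3*x4 - 2*al*l2*x4^2 + 2*al*x4*g
  <= - mu * (e^2 + f^2 + x3^2 + al * x4^2) + al / l2 * g^2.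
Proof.
  intros HKp HKv Hl1 Hl2 Hmu Hm1 Hm2 Hm3 Hm4 Hal0.
  assert (H1 : 2*x3*x4 <= l1*x3^2 + x4^2/l1).
  { assert (0 <= (l1*x3 - x4)^2 / l1) as H10 by (apply Rdiv_le_0_compat; [apply pow2_ge_0|lra]).
    replace ((l1*x3 - x4)^2 / l1) with (l1*x3^2 - 2*x3*x4 + x4^2/l1) in H10 by (field; lra). lra. }
  assert (Hal : 1 <= al). { rewrite Hal0. assert (0 < 2/(l1*l2)) by (apply Rdiv_lt_0_compat; nra). lra. }
  assert (H2 : 2*al*x4*g <= al*l2*x4^2 + al/l2*g^2).
  { assert (0 <= al * (l2*x4 - g)^2 / l2) as H10 by (apply Rdiv_le_0_compat; [apply Rmult_le_pos; [lra|apply pow2_ge_0]|lra]).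
    replace (al * (l2*x4 - g)^2 / l2) with (al*l2*x4^2 - 2*al*x4*g + al/l2*g^2) in H10 by (field; lra). lra. }
  assert (H3 : mu * al <= al * l2 - 1/l1).
  { rewrite Hal0. replace ((1 + 2/(l1*l2))*l2) with (l2 + 2/l1) by (field; lra).
    assert (mu * (2/(l1*l2)) <= 1/l1).
    { replace (1/l1) with ((l2/2) * (2/(l1*l2))) by (field; lra).
      apply Rmult_le_compat_r. apply Rlt_le, Rdiv_lt_0_compat; nra. lra. }
    nra. }
  assert (x4^2/l1 = (1/l1)*x4^2) by (field; lra).
  assert (0 <= x4^2) by nra. assert (0 <= e^2) by nra. assert (0 <= f^2) by nra. assert (0 <= x3^2) by nra.
  nra.
Qed.

Lemma cs2 a b : (a + b)^2 <= 2*(a^2 + b^2).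
Proof. pose proof (pow2_ge_0 (a-b)). nra. Qed.
Lemma cs4 a b c d : (a + b + c + d)^2 <= 4*(a^2 + b^2 + c^2 + d^2).
Proof. pose proof (pow2_ge_0 (a-b)). pose proof (pow2_ge_0 (a-c)). pose proof (pow2_ge_0 (a-d)).
 pose proof (pow2_ge_0 (b-c)). pose proof (pow2_ge_0 (b-d)). pose proof (pow2_ge_0 (c-d)). nra. Qed.
Lemma cs5 a b c d e : (a + b + c + d + e)^2 <= 5*(a^2 + b^2 + c^2 + d^2 + e^2).
Proof. pose proof (pow2_ge_0 (a-b)). pose proof (pow2_ge_0 (a-c)). pose proof (pow2_ge_0 (a-d)).
 pose proof (pow2_ge_0 (b-c)). pose proof (pow2_ge_0 (b-d)). pose proof (pow2_ge_0 (c-d)).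
 pose proof (pow2_ge_0 (a-e)). pose proof (pow2_ge_0 (b-e)). pose proof (pow2_ge_0 (c-e)). pose proof (pow2_ge_0 (d-e)). nra. Qed.

Lemma normN1 Kdp l1 x1 x2 x3 x4 :
  let e := x1 + x3 in let f := x2 - l1*x3 + x4 + Kdp*(x1+x3) in
  x1^2 + x2^2 + x3^2 + x4^2 <= (5 + 4*Kdp^2 + 4*l1^2) * (e^2 + f^2 + x3^2 + x4^2).
Proof.
  intros e f.
  assert (E1 : x1 = e + - x3) by (unfold e; ring).
  assert (E2 : x2 = f + - Kdp*e + l1*x3 + - x4) by (unfold e, f; ring).
  pose proof (cs2 e (-x3)). pose proof (cs4 f (-Kdp*e) (l1*x3) (-x4)).
  rewrite E1, E2. 
  assert (0 <= Kdp^2 * e^2) by (apply Rmult_le_pos; apply pow2_ge_0).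
  assert (0 <= l1^2 * x3^2) by (apply Rmult_le_pos; apply pow2_ge_0).
  pose proof (pow2_ge_0 e). pose proof (pow2_ge_0 f). pose proof (pow2_ge_0 x3). pose proof (pow2_ge_0 x4).
  assert (0 <= Kdp^2 * f^2) by (apply Rmult_le_pos; apply pow2_ge_0).
  assert (0 <= Kdp^2 * x3^2) by (apply Rmult_le_pos; apply pow2_ge_0).
  assert (0 <= Kdp^2 * x4^2) by (apply Rmult_le_pos; apply pow2_ge_0).
  assert (0 <= l1^2 * e^2) by (apply Rmult_le_pos; apply pow2_ge_0).
  assert (0 <= l1^2 * f^2) by (apply Rmult_le_pos; apply pow2_ge_0).
  assert (0 <= l1^2 * x4^2) by (apply Rmult_le_pos; apply pow2_ge_0).
  replace ((-x3)^2) with (x3^2) in * by ring. replace ((-x4)^2) with (x4^2) in * by ring.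
  replace ((-Kdp*e)^2) with (Kdp^2*e^2) in * by ring. replace ((l1*x3)^2) with (l1^2*x3^2) in * by ring.
  nra.
Qed.

Lemma normN2 Kdp l1 x1 x2 x3 x4 :
  let e := x1 + x3 in let f := x2 - l1*x3 + x4 + Kdp*(x1+x3) in
  e^2 + f^2 + x3^2 + x4^2 <= (6 + 5*l1^2 + 5*Kdp^2) * (x1^2 + x2^2 + x3^2 + x4^2).
Proof.
  intros e f.
  pose proof (cs2 x1 x3). pose proof (cs5 x2 (-l1*x3) x4 (Kdp*x1) (Kdp*x3)).
  replace f with (x2 + -l1*x3 + x4 + Kdp*x1 + Kdp*x3) by (unfold f; ring).
  unfold e.
  replace ((-l1*x3)^2) with (l1^2*x3^2) in * by ring. replace ((Kdp*x1)^2) with (Kdp^2*x1^2) in * by ring.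
  replace ((Kdp*x3)^2) with (Kdp^2*x3^2) in * by ring.
  pose proof (pow2_ge_0 x1). pose proof (pow2_ge_0 x2). pose proof (pow2_ge_0 x3). pose proof (pow2_ge_0 x4).
  assert (0 <= Kdp^2 * x2^2) by (apply Rmult_le_pos; apply pow2_ge_0).
  assert (0 <= Kdp^2 * x4^2) by (apply Rmult_le_pos; apply pow2_ge_0).
  assert (0 <= l1^2 * x1^2) by (apply Rmult_le_pos; apply pow2_ge_0).
  assert (0 <= l1^2 * x2^2) by (apply Rmult_le_pos; apply pow2_ge_0).
  assert (0 <= l1^2 * x4^2) by (apply Rmult_le_pos; apply pow2_ge_0).
  assert (0 <= Kdp^2 * x3^2) by (apply Rmult_le_pos; apply pow2_ge_0).
  assert (0 <= Kdp^2 * x1^2) by (apply Rmult_le_pos; apply pow2_ge_0).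
  assert (0 <= l1^2 * x3^2) by (apply Rmult_le_pos; apply pow2_ge_0).
  nra.
Qed.

Definition alC (l1 l2 : R) := 1 + 2/(l1*l2).
Definition muC (Kdp Kdv l1 l2 : R) := Rmin (Rmin Kdp Kdv) (Rmin l1 (l2/2)).
Definition C1C (Kdp l1 : R) := 5 + 4*Kdp^2 + 4*l1^2.
Definition C3C (Kdp l1 : R) := 6 + 5*l1^2 + 5*Kdp^2.
Definition AC (Kdp Kdv l1 l2 : R) := C1C Kdp l1 * alC l1 l2 * C3C Kdp l1 + 1.
Definition BC (Kdp Kdv l1 l2 : R) := C1C Kdp l1 * (alC l1 l2 / (l2 * muC Kdp Kdv l1 l2)) + 1.

Lemma muC_facts Kdp Kdv l1 l2 : 0 < Kdp -> 0 < Kdv -> 0 < l1 -> 0 < l2 ->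
  let mu := muC Kdp Kdv l1 l2 in
  0 < mu /\ mu <= Kdp /\ mu <= Kdv /\ mu <= l1 /\ mu <= l2 / 2.
Proof.
  intros. unfold mu, muC.
  pose proof (Rmin_l (Rmin Kdp Kdv) (Rmin l1 (l2/2))). pose proof (Rmin_r (Rmin Kdp Kdv) (Rmin l1 (l2/2))).
  pose proof (Rmin_l Kdp Kdv). pose proof (Rmin_r Kdp Kdv). pose proof (Rmin_l l1 (l2/2)). pose proof (Rmin_r l1 (l2/2)).
  repeat split; try lra.
  apply Rmin_glb_lt; apply Rmin_glb_lt; lra.
Qed.

Lemma der_lin (z1 z2 z3 z4 : R -> R) (s d1 d2 d3 d4 c1 c2 c3 c4 : R) :
  is_derive z1 s d1 -> is_derive z2 s d2 -> is_derive z3 s d3 -> is_derive z4 s d4 ->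
  is_derive (fun s => c1 * z1 s + c2 * z2 s + c3 * z3 s + c4 * z4 s) s (c1*d1 + c2*d2 + c3*d3 + c4*d4).
Proof.
  intros H1 H2 H3 H4.
  apply (der_plus (fun s => c1 * z1 s + c2 * z2 s + c3 * z3 s)). 2: now apply is_derive_scal.
  apply (der_plus (fun s => c1 * z1 s + c2 * z2 s)). 2: now apply is_derive_scal.
  apply (der_plus (fun s => c1 * z1 s)). all: now apply is_derive_scal.
Qed.

Lemma der_sq (f : R -> R) (x d : R) : is_derive f x d -> is_derive (fun s => f s ^ 2) x (2 * f x * d).
Proof.
  intro H. apply (der_ext (fun s => f s * f s)). intros; ring.
  eapply der_eq. apply der_mult; eauto. ring.
Qed.

Lemma cw_lin (z1 z2 z3 z4 : R -> R) c1 c2 c3 c4 t : cw z1 t -> cw z2 t -> cw z3 t -> cw z4 t ->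
  cw (fun s => c1 * z1 s + c2 * z2 s + c3 * z3 s + c4 * z4 s) t.
Proof.
  intros. repeat apply cw_plus; apply cw_mult; auto; apply cw_const.
Qed.

Lemma cw_sq f t : cw f t -> cw (fun s => f s ^ 2) t.
Proof.
  intro H. assert (E : (fun s => f s ^ 2) = (fun s => f s * f s)).
  { apply functional_extensionality. intros; ring. }
  rewrite E. now apply cw_mult.
Qed.

Definition S4 (z1 z2 z3 z4 : R -> R) (s : R) := z1 s ^ 2 + z2 s ^ 2 + z3 s ^ 2 + z4 s ^ 2.

Lemma sq_le_AB X : 0 <= X -> X <= (X + 1) ^ 2.
Proof. intros; nra. Qed.

Lemma core Kdp Kdv l1 l2 (z1 z2 z3 z4 g : R -> R) (G t : R) :
  0 < Kdp -> 0 < Kdv -> 0 < l1 -> 0 < l2 ->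
  sol_on z1 z2 ->
  sol_on z2 (fun t => rhs2 Kdp Kdv l1 l2 (z1 t) (z2 t) (z3 t) (z4 t) (g t)) ->
  sol_on z3 (fun t => - l1 * z3 t + z4 t) ->
  sol_on z4 (fun t => - l2 * z4 t + g t) ->
  0 <= G -> 0 <= t -> (forall s, 0 < s <= t -> Rabs (g s) <= G) ->
  S4 z1 z2 z3 z4 t <= (AC Kdp Kdv l1 l2)^2 * S4 z1 z2 z3 z4 0 * exp (- muC Kdp Kdv l1 l2 * t)
                      + (BC Kdp Kdv l1 l2)^2 * G^2.
Proof.
  intros HKp HKv Hl1 Hl2 [C1 D1] [C2 D2] [C3 D3] [C4 D4] HG Ht Hg.
  destruct (muC_facts Kdp Kdv l1 l2 HKp HKv Hl1 Hl2) as [Hmu [Hm1 [Hm2 [Hm3 Hm4]]]].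
  set (mu := muC Kdp Kdv l1 l2) in *.
  set (al := alC l1 l2).
  assert (Hal : 1 <= al). { unfold al, alC. assert (0 < 2/(l1*l2)) by (apply Rdiv_lt_0_compat; nra). lra. }
  set (L1 := fun s => 1 * z1 s + 0 * z2 s + 1 * z3 s + 0 * z4 s).
  set (L2 := fun s => Kdp * z1 s + 1 * z2 s + (Kdp - l1) * z3 s + 1 * z4 s).
  set (L3 := fun s => 0 * z1 s + 0 * z2 s + 1 * z3 s + 0 * z4 s).
  set (L4 := fun s => 0 * z1 s + 0 * z2 s + 0 * z3 s + 1 * z4 s).
  set (r2 := fun t => rhs2 Kdp Kdv l1 l2 (z1 t) (z2 t) (z3 t) (z4 t) (g t)).
  set (d3 := fun t => - l1 * z3 t + z4 t).
  set (d4 := fun t => - l2 * z4 t + g t).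
  set (U := fun s => L1 s ^ 2 + L2 s ^ 2 + L3 s ^ 2 + al * L4 s ^ 2).
  set (dU := fun s =>
     2 * L1 s * (1 * z2 s + 0 * r2 s + 1 * d3 s + 0 * d4 s)
   + 2 * L2 s * (Kdp * z2 s + 1 * r2 s + (Kdp - l1) * d3 s + 1 * d4 s)
   + 2 * L3 s * (0 * z2 s + 0 * r2 s + 1 * d3 s + 0 * d4 s)
   + al * (2 * L4 s * (0 * z2 s + 0 * r2 s + 0 * d3 s + 1 * d4 s))).
  assert (HU : U t <= U 0 * exp (- mu * t) + (al / l2 * G ^ 2) / mu).
  { apply (comp_lemma U dU); auto.
    - apply Rmult_le_pos. apply Rdiv_le_0_compat; lra. apply pow2_ge_0.
    - assert (c1 : cw z1 0) by (apply C1; lra). assert (c2 : cw z2 0) by (apply C2; lra).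
      assert (c3 : cw z3 0) by (apply C3; lra). assert (c4 : cw z4 0) by (apply C4; lra).
      unfold U. repeat apply cw_plus.
      + apply cw_sq. now apply cw_lin.
      + apply cw_sq. now apply cw_lin.
      + apply cw_sq. now apply cw_lin.
      + apply cw_mult. apply cw_const. apply cw_sq. now apply cw_lin.
    - intros s Hs.
      assert (e1 := D1 s Hs). assert (e2 := D2 s Hs). assert (e3 := D3 s Hs). assert (e4 := D4 s Hs).
      unfold U, dU.
      apply (der_plus (fun s => L1 s ^ 2 + L2 s ^ 2 + L3 s ^ 2)).
      apply (der_plus (fun s => L1 s ^ 2 + L2 s ^ 2)).
      apply (der_plus (fun s => L1 s ^ 2)).
      + apply der_sq. now apply der_lin.
      + apply der_sq. now apply der_lin.
      + apply der_sq. now apply der_lin.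
      + apply is_derive_scal. apply der_sq. now apply der_lin.
    - intros s Hs.
      assert (Hgs := Hg s Hs).
      assert (g s ^ 2 <= G ^ 2).
      { apply Rabs_le_between in Hgs. nra. }
      assert (Hal2 : 0 <= al / l2) by (apply Rdiv_le_0_compat; lra).
      pose proof (lyap_ineq Kdp Kdv l1 l2 mu al (L1 s) (L2 s) (z3 s) (z4 s) (g s)
                    HKp HKv Hl1 Hl2 Hmu Hm1 Hm2 Hm3 Hm4 eq_refl) as Hly.
      assert (E : dU s = -2*Kdp*L1 s^2 - 2*Kdv*L2 s^2 - 2*l1*z3 s^2 + 2*z3 s*z4 s
                   - 2*al*l2*z4 s^2 + 2*al*z4 s*g s).
      { unfold dU, L1, L2, L3, L4, r2, d3, d4, rhs2. ring. }
      assert (E2 : U s = L1 s ^ 2 + L2 s ^ 2 + z3 s ^ 2 + al * z4 s ^ 2).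
      { unfold U, L3, L4. ring. }
      rewrite E, E2. nra. }
  pose proof (normN1 Kdp l1 (z1 t) (z2 t) (z3 t) (z4 t)) as N1. cbv zeta in N1.
  pose proof (normN2 Kdp l1 (z1 0) (z2 0) (z3 0) (z4 0)) as N2. cbv zeta in N2.
  set (Qt := L1 t ^ 2 + L2 t ^ 2 + z3 t ^ 2 + z4 t ^ 2).
  set (Q0 := L1 0 ^ 2 + L2 0 ^ 2 + z3 0 ^ 2 + z4 0 ^ 2).
  assert (EQt : (z1 t + z3 t) ^ 2 + (z2 t - l1 * z3 t + z4 t + Kdp * (z1 t + z3 t)) ^ 2 + z3 t ^ 2 + z4 t ^ 2 = Qt)
    by (unfold Qt, L1, L2; ring).
  assert (EQ0 : (z1 0 + z3 0) ^ 2 + (z2 0 - l1 * z3 0 + z4 0 + Kdp * (z1 0 + z3 0)) ^ 2 + z3 0 ^ 2 + z4 0 ^ 2 = Q0)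
    by (unfold Q0, L1, L2; ring).
  rewrite EQt in N1. rewrite EQ0 in N2.
  pose proof (pow2_ge_0 (z4 t)). pose proof (pow2_ge_0 (z4 0)).
  pose proof (pow2_ge_0 (L1 0)). pose proof (pow2_ge_0 (L2 0)). pose proof (pow2_ge_0 (z3 0)).
  assert (HQU : Qt <= U t) by (unfold Qt, U, L3, L4; ring_simplify; nra).
  assert (HU0 : U 0 <= al * Q0) by (unfold Q0, U, L3, L4; ring_simplify; nra).
  assert (HC1 : 0 <= C1C Kdp l1) by (unfold C1C; pose proof (pow2_ge_0 Kdp); pose proof (pow2_ge_0 l1); lra).
  assert (HC3 : 0 <= C3C Kdp l1) by (unfold C3C; pose proof (pow2_ge_0 Kdp); pose proof (pow2_ge_0 l1); lra).
  fold (C1C Kdp l1) in N1. fold (C3C Kdp l1) in N2.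
  unfold S4.
  set (S0 := z1 0 ^ 2 + z2 0 ^ 2 + z3 0 ^ 2 + z4 0 ^ 2) in *.
  set (E := exp (- mu * t)) in *. assert (HE : 0 < E) by apply exp_pos.
  assert (HS0 : 0 <= S0) by (unfold S0; pose proof (pow2_ge_0 (z1 0)); pose proof (pow2_ge_0 (z2 0)); lra).
  assert (Hk : (al / l2 * G ^ 2) / mu = (al / (l2 * mu)) * G ^ 2) by (field; lra).
  rewrite Hk in HU.
  assert (HK0 : 0 <= al / (l2 * mu)) by (apply Rdiv_le_0_compat; nra).
  assert (HA : C1C Kdp l1 * al * C3C Kdp l1 <= (AC Kdp Kdv l1 l2) ^ 2).
  { unfold AC. apply sq_le_AB. fold al. apply Rmult_le_pos; [apply Rmult_le_pos|]; lra. }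
  assert (HB : C1C Kdp l1 * (al / (l2 * mu)) <= (BC Kdp Kdv l1 l2) ^ 2).
  { unfold BC. apply sq_le_AB. fold al mu. apply Rmult_le_pos; lra. }
  fold al mu in HA, HB.
  assert (St1 : z1 t ^ 2 + z2 t ^ 2 + z3 t ^ 2 + z4 t ^ 2 <= C1C Kdp l1 * (U 0 * E + al / (l2 * mu) * G ^ 2)).
  { eapply Rle_trans. exact N1. apply Rmult_le_compat_l. lra. lra. }
  assert (U 0 * E <= al * C3C Kdp l1 * S0 * E).
  { apply Rmult_le_compat_r. lra. eapply Rle_trans. exact HU0. rewrite Rmult_assoc. apply Rmult_le_compat_l; lra. }
  pose proof (pow2_ge_0 G).
  assert (C1C Kdp l1 * al * C3C Kdp l1 * (S0 * E) <= AC Kdp Kdv l1 l2 ^ 2 * (S0 * E))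
    by (apply Rmult_le_compat_r; [apply Rmult_le_pos|]; lra).
  assert (C1C Kdp l1 * (al / (l2 * mu)) * G ^ 2 <= BC Kdp Kdv l1 l2 ^ 2 * G ^ 2)
    by (apply Rmult_le_compat_r; lra).
  assert (C1C Kdp l1 * (al * C3C Kdp l1 * S0 * E) <= C1C Kdp l1 * (U 0 * E) + 0 \/ True) by (right; exact I).
  assert (C1C Kdp l1 * (U 0 * E) <= C1C Kdp l1 * (al * C3C Kdp l1 * S0 * E)) by (apply Rmult_le_compat_l; lra).
  nra.
Qed.

Lemma AC_pos Kdp Kdv l1 l2 : 0 < l1 -> 0 < l2 -> 0 < Kdp -> 0 < Kdv -> 1 <= AC Kdp Kdv l1 l2.
Proof.
  intros. unfold AC. assert (0 <= C1C Kdp l1) by (unfold C1C; pose proof (pow2_ge_0 Kdp); pose proof (pow2_ge_0 l1); lra).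
  assert (0 <= C3C Kdp l1) by (unfold C3C; pose proof (pow2_ge_0 Kdp); pose proof (pow2_ge_0 l1); lra).
  assert (0 <= alC l1 l2) by (unfold alC; assert (0 < 2/(l1*l2)) by (apply Rdiv_lt_0_compat; nra); lra).
  assert (0 <= C1C Kdp l1 * alC l1 l2 * C3C Kdp l1) by (repeat apply Rmult_le_pos; lra). lra.
Qed.

Lemma BC_pos Kdp Kdv l1 l2 : 0 < l1 -> 0 < l2 -> 0 < Kdp -> 0 < Kdv -> 1 <= BC Kdp Kdv l1 l2.
Proof.
  intros. unfold BC. assert (0 <= C1C Kdp l1) by (unfold C1C; pose proof (pow2_ge_0 Kdp); pose proof (pow2_ge_0 l1); lra).
  assert (0 <= alC l1 l2) by (unfold alC; assert (0 < 2/(l1*l2)) by (apply Rdiv_lt_0_compat; nra); lra).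
  destruct (muC_facts Kdp Kdv l1 l2) as [Hm _]; auto.
  assert (0 <= alC l1 l2 / (l2 * muC Kdp Kdv l1 l2)) by (apply Rdiv_le_0_compat; nra).
  assert (0 <= C1C Kdp l1 * (alC l1 l2 / (l2 * muC Kdp Kdv l1 l2))) by (apply Rmult_le_pos; lra). lra.
Qed.

Lemma sqrt_le_sum X p q : 0 <= p -> 0 <= q -> X <= p ^ 2 + q ^ 2 -> sqrt X <= p + q.
Proof.
  intros Hp Hq HX. rewrite <- (sqrt_pow2 (p + q)) by lra.
  apply sqrt_le_1_alt. nra.
Qed.

Lemma core_norm Kdp Kdv l1 l2 (z1 z2 z3 z4 g : R -> R) (G t : R) :
  0 < Kdp -> 0 < Kdv -> 0 < l1 -> 0 < l2 ->
  sol_on z1 z2 ->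
  sol_on z2 (fun t => rhs2 Kdp Kdv l1 l2 (z1 t) (z2 t) (z3 t) (z4 t) (g t)) ->
  sol_on z3 (fun t => - l1 * z3 t + z4 t) ->
  sol_on z4 (fun t => - l2 * z4 t + g t) ->
  0 <= G -> 0 <= t -> (forall s, 0 < s <= t -> Rabs (g s) <= G) ->
  norm4 (z1 t) (z2 t) (z3 t) (z4 t) <=
    AC Kdp Kdv l1 l2 * norm4 (z1 0) (z2 0) (z3 0) (z4 0) * exp (- (muC Kdp Kdv l1 l2 / 2) * t)
    + BC Kdp Kdv l1 l2 * G.
Proof.
  intros HKp HKv Hl1 Hl2 H1 H2 H3 H4 HG Ht Hg.
  pose proof (core Kdp Kdv l1 l2 z1 z2 z3 z4 g G t HKp HKv Hl1 Hl2 H1 H2 H3 H4 HG Ht Hg) as H.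
  pose proof (AC_pos Kdp Kdv l1 l2 Hl1 Hl2 HKp HKv). pose proof (BC_pos Kdp Kdv l1 l2 Hl1 Hl2 HKp HKv).
  unfold norm4. fold (S4 z1 z2 z3 z4 t). fold (S4 z1 z2 z3 z4 0).
  assert (HS0 : 0 <= S4 z1 z2 z3 z4 0).
  { unfold S4. pose proof (pow2_ge_0 (z1 0)). pose proof (pow2_ge_0 (z2 0)). pose proof (pow2_ge_0 (z3 0)). pose proof (pow2_ge_0 (z4 0)). lra. }
  apply sqrt_le_sum.
  - apply Rmult_le_pos. apply Rmult_le_pos. lra. apply sqrt_pos. left; apply exp_pos.
  - apply Rmult_le_pos; lra.
  - replace ((AC Kdp Kdv l1 l2 * sqrt (S4 z1 z2 z3 z4 0) * exp (- (muC Kdp Kdv l1 l2 / 2) * t)) ^ 2)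
      with (AC Kdp Kdv l1 l2 ^ 2 * (sqrt (S4 z1 z2 z3 z4 0)) ^ 2 * (exp (- (muC Kdp Kdv l1 l2 / 2) * t) ^ 2)) by ring.
    rewrite pow2_sqrt by exact HS0.
    replace (exp (- (muC Kdp Kdv l1 l2 / 2) * t) ^ 2) with (exp (- muC Kdp Kdv l1 l2 * t)).
    + replace ((BC Kdp Kdv l1 l2 * G) ^ 2) with (BC Kdp Kdv l1 l2 ^ 2 * G ^ 2) by ring. exact H.
    + simpl. rewrite Rmult_1_r, <- exp_plus. f_equal. field.
Qed.

Lemma sum_bound (h : nat -> R) n B : (forall j, (j <= n)%nat -> h j <= B) ->
  sum_f_R0 h n <= INR (n + 1) * B.
Proof.
  induction n as [|n IH]; intros Hb.
  - simpl. specialize (Hb 0%nat (le_n 0)). lra.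
  - simpl sum_f_R0. replace (INR (S n + 1)) with (INR (n + 1) + 1) by (rewrite <- S_INR; f_equal; lia).
    assert (sum_f_R0 h n <= INR (n + 1) * B) by (apply IH; intros; apply Hb; lia).
    assert (h (S n) <= B) by (apply Hb; lia). lra.
Qed.

Lemma sum_abs_bound (f : nat -> R) n M : (forall j, (j <= n)%nat -> Rabs (f j) <= M) ->
  Rabs (sum_f_R0 f n) <= INR (n + 1) * M.
Proof.
  induction n as [|n IH]; intros Hb.
  - simpl. specialize (Hb 0%nat (le_n 0)). lra.
  - simpl sum_f_R0. replace (INR (S n + 1)) with (INR (n + 1) + 1) by (rewrite <- S_INR; f_equal; lia).
    assert (Rabs (sum_f_R0 f n) <= INR (n + 1) * M) by (apply IH; intros; apply Hb; lia).
    assert (Rabs (f (S n)) <= M) by (apply Hb; lia).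
    pose proof (Rabs_triang (sum_f_R0 f n) (f (S n))). lra.
Qed.

Lemma INR_S_pos n : 0 < INR (n + 1).
Proof. replace (n + 1)%nat with (S n) by lia. apply lt_0_INR. lia. Qed.

Lemma mean_bound f m M : (forall j, (j <= m)%nat -> Rabs (f j) <= M) -> Rabs (mean f m) <= M.
Proof.
  intros Hb. unfold mean. pose proof (INR_S_pos m).
  unfold Rdiv. rewrite Rabs_mult, Rabs_inv, (Rabs_pos_eq (INR (m+1))) by lra.
  apply (Rmult_le_reg_r (INR (m + 1))). lra.
  rewrite Rmult_assoc, Rinv_l by lra. rewrite Rmult_1_r, Rmult_comm.
  apply sum_abs_bound; auto.
Qed.

Lemma pvar_bound f m M : 0 <= M -> (forall j, (j <= m)%nat -> Rabs (f j) <= M) -> pvar f m <= (2 * M) ^ 2.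
Proof.
  intros HM Hb. unfold pvar. pose proof (INR_S_pos m).
  pose proof (mean_bound f m M Hb) as Hmn.
  assert (Hs : sum_f_R0 (fun j => (f j - mean f m) ^ 2) m <= INR (m + 1) * (2 * M) ^ 2).
  { apply sum_bound. intros j Hj. specialize (Hb j Hj).
    apply Rabs_le_between in Hb. apply Rabs_le_between in Hmn. nra. }
  unfold Rdiv. apply (Rmult_le_reg_r (INR (m + 1))). lra.
  rewrite Rmult_assoc, Rinv_l by lra. rewrite Rmult_1_r. lra.
Qed.

Lemma sgn_bound x : Rabs (sgn x) <= 1.
Proof.
  unfold sgn. destruct (Rlt_dec 0 x). rewrite Rabs_R1; lra.
  destruct (Rlt_dec x 0). rewrite Rabs_left; lra. rewrite Rabs_R0; lra.
Qed.

Lemma psi_bound gam f m M : 0 <= gam -> 0 <= M -> (forall j, (j <= m)%nat -> Rabs (f j) <= M) ->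
  Rabs (psi gam f m) <= gam * (2 * M).
Proof.
  intros Hg HM Hb. unfold psi.
  rewrite Rabs_mult, Rabs_mult, (Rabs_pos_eq gam Hg), (Rabs_pos_eq (sqrt _)) by apply sqrt_pos.
  pose proof (sgn_bound (mean f m)).
  assert (sqrt (pvar f m) <= 2 * M).
  { rewrite <- (sqrt_pow2 (2 * M)) by lra. apply sqrt_le_1_alt. apply pvar_bound; auto. }
  pose proof (sqrt_pos (pvar f m)). pose proof (Rabs_pos (sgn (mean f m))).
  assert (Rabs (sgn (mean f m)) * sqrt (pvar f m) <= 2 * M) by nra.
  nra.
Qed.

Lemma abs_le_norm4 a b c d : Rabs a <= norm4 a b c d /\ Rabs b <= norm4 a b c d.
Proof.
  unfold norm4. pose proof (pow2_ge_0 a). pose proof (pow2_ge_0 b). pose proof (pow2_ge_0 c). pose proof (pow2_ge_0 d).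
  split; rewrite <- sqrt_Rsqr_abs; apply sqrt_le_1_alt; unfold Rsqr; simpl in *; nra.
Qed.

Lemma g_bound a b gdp gdv (x1 x2 x3 x4 : nat -> R -> R) i s M :
  0 <= a -> 0 <= b -> 0 <= gdp -> 0 <= gdv -> 0 <= M ->
  (forall j, (j < i)%nat -> norm4 (x1 j s) (x2 j s) (x3 j s) (x4 j s) <= M) ->
  Rabs (gterm a b gdp gdv x1 x2 i s) <= 2 * (a * gdp + b * gdv) * M.
Proof.
  intros Ha Hb Hgp Hgv HM Hn. destruct i as [|m]; simpl.
  - rewrite Rabs_R0. apply Rmult_le_pos; [|lra]. apply Rmult_le_pos; [lra|]. nra.
  - pose proof (psi_bound gdp (fun j => x1 j s) m M Hgp HM) as P1.
    pose proof (psi_bound gdv (fun j => x2 j s) m M Hgv HM) as P2.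
    assert (Q1 : Rabs (psi gdp (fun j => x1 j s) m) <= gdp * (2 * M)).
    { apply P1. intros j Hj. eapply Rle_trans. apply (abs_le_norm4 _ (x2 j s) (x3 j s) (x4 j s)). apply Hn. lia. }
    assert (Q2 : Rabs (psi gdv (fun j => x2 j s) m) <= gdv * (2 * M)).
    { apply P2. intros j Hj. eapply Rle_trans. apply (abs_le_norm4 (x1 j s) _ (x3 j s) (x4 j s)). apply Hn. lia. }
    eapply Rle_trans. apply Rabs_triang. rewrite !Rabs_mult, (Rabs_pos_eq a), (Rabs_pos_eq b) by lra.
    nra.
Qed.

Definition beC (A c : R) := fun r t => A * r * exp (- c * t).

Lemma exp_decay c : 0 < c -> is_lim (fun t => exp (- c * t)) p_infty 0.
Proof.
  intro Hc.
  apply (is_lim_comp exp (fun t => - c * t) p_infty 0 m_infty).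
  - apply is_lim_exp_m.
  - apply is_lim_spec. intros M. simpl. exists (- M / c). intros x Hx.
    apply (Rmult_lt_compat_l c) in Hx; auto. replace (c * (- M / c)) with (- M) in Hx by (field; lra). lra.
  - simpl. exists 0. intros; discriminate.
Qed.

Lemma beC_KL A c : 0 < A -> 0 < c -> classKL (beC A c).
Proof.
  intros HA Hc. split.
  - intros t Ht. unfold classK, beC. split; [ring|split].
    + intros r Hr. apply (cw_mult (fun r => A * r) (fun _ => exp (- c * t))). apply (cw_mult (fun _ => A) (fun r => r)). apply cw_const. apply cw_cont. apply continuous_id. apply cw_const.
    + intros r s Hr Hrs. pose proof (exp_pos (- c * t)). assert (0 < A * exp (- c * t)) by (apply Rmult_lt_0_compat; lra). apply Rminus_lt. replace (A * r * exp (- c * t) - A * s * exp (- c * t)) with (- (A * exp (- c * t) * (s - r))) by ring. assert (0 < A * exp (- c * t) * (s - r)) by (apply Rmult_lt_0_compat; lra). lra.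
  - intros r Hr. split.
    + intros s t Hs Hst. unfold beC. destruct (Req_dec s t) as [->|Hne]; [lra|].
      assert (exp (- c * t) < exp (- c * s)) by (apply exp_increasing; nra).
      assert (0 <= A * r) by nra. nra.
    + unfold beC. replace (Finite 0) with (Rbar_mult (A * r) 0) by (simpl; f_equal; ring).
      apply is_lim_scal_l. apply exp_decay; auto.
Qed.

Lemma iss_core Kdp Kdv l1 l2 gdp gdv a b gam :
  0 < Kdp -> 0 < Kdv -> 0 < l1 -> 0 < l2 -> 0 < gdp -> 0 < gdv -> 0 <= a -> 0 <= b ->
  2 * BC Kdp Kdv l1 l2 * (a * gdp + b * gdv) <= gam ->
  forall (N : nat) (x1 x2 x3 x4 : nat -> R -> R),
      platoon_sol Kdp Kdv l1 l2 gdp gdv a b N x1 x2 x3 x4 ->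
      forall i, (i <= N)%nat -> forall t, 0 <= t ->
      forall M, 0 <= M ->
        (forall j tau, (j < i)%nat -> 0 <= tau -> tau <= t ->
           norm4 (x1 j tau) (x2 j tau) (x3 j tau) (x4 j tau) <= M) ->
        norm4 (x1 i t) (x2 i t) (x3 i t) (x4 i t)
        <= beC (AC Kdp Kdv l1 l2) (muC Kdp Kdv l1 l2 / 2) (norm4 (x1 i 0) (x2 i 0) (x3 i 0) (x4 i 0)) t + gam * M.
Proof.
  intros HKp HKv Hl1 Hl2 Hgp Hgv Ha Hb Hgam N x1 x2 x3 x4 Hp i Hi t Ht M HM Hbd.
  destruct (Hp i Hi) as [H1 [H2 [H3 H4]]].
  pose proof (BC_pos Kdp Kdv l1 l2 Hl1 Hl2 HKp HKv).
  assert (HL : 0 <= a * gdp + b * gdv) by nra.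
  assert (HG : 0 <= 2 * (a * gdp + b * gdv) * M) by (apply Rmult_le_pos; lra).
  eapply Rle_trans.
  apply (core_norm Kdp Kdv l1 l2 (x1 i) (x2 i) (x3 i) (x4 i) (gterm a b gdp gdv x1 x2 i) _ t
           HKp HKv Hl1 Hl2 H1 H2 H3 H4 HG Ht).
  - intros s Hs. apply (g_bound a b gdp gdv x1 x2 x3 x4); try lra. intros j Hj. apply Hbd; auto; lra.
  - unfold beC. replace (- (muC Kdp Kdv l1 l2 / 2) * t) with (- (muC Kdp Kdv l1 l2 / 2) * t) by ring.
    assert (BC Kdp Kdv l1 l2 * (2 * (a * gdp + b * gdv) * M) <= gam * M).
    { replace (BC Kdp Kdv l1 l2 * (2 * (a * gdp + b * gdv) * M)) with (2 * BC Kdp Kdv l1 l2 * (a * gdp + b * gdv) * M) by ring.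
      apply Rmult_le_compat_r; lra. }
    lra.
Qed.

Lemma shift_sol (f df : R -> R) T : 0 < T -> sol_on f df ->
  sol_on (fun s => f (T + s)) (fun s => df (T + s)).
Proof.
  intros HT [Hc Hd]. split.
  - intros s Hs. apply (cw_cont (fun s => f (T + s)) s).
    apply (continuous_comp (fun s => T + s) f s).
    + apply (continuous_plus (fun _ => T) (fun s => s)). apply continuous_const. apply continuous_id.
    + apply (ex_derive_continuous (K:=R_AbsRing) (V:=R_NormedModule)). eexists. apply Hd. lra.
  - intros s Hs.
    assert (H1 : is_derive (fun s => T + s) s 1).
    { eapply der_eq. apply (der_plus (fun _ => T) (fun s => s)). apply der_const. apply (is_derive_id (K:=R_AbsRing)). rewrite Rplus_0_l. reflexivity. }
    pose proof (is_derive_comp f (fun s => T + s) s (df (T + s)) 1 (Hd (T + s) ltac:(lra)) H1) as H.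
    eapply der_eq. exact H. simpl. unfold scal; simpl. unfold mult; simpl. ring.
Qed.

Lemma shift_platoon Kdp Kdv l1 l2 gdp gdv a b N (x1 x2 x3 x4 : nat -> R -> R) T :
  0 < T -> platoon_sol Kdp Kdv l1 l2 gdp gdv a b N x1 x2 x3 x4 ->
  platoon_sol Kdp Kdv l1 l2 gdp gdv a b N
    (fun j s => x1 j (T + s)) (fun j s => x2 j (T + s)) (fun j s => x3 j (T + s)) (fun j s => x4 j (T + s)).
Proof.
  intros HT Hp i Hi. destruct (Hp i Hi) as [H1 [H2 [H3 H4]]].
  split; [|split; [|split]].
  - exact (shift_sol _ _ T HT H1).
  - pose proof (shift_sol _ _ T HT H2) as H. destruct i; exact H.
  - exact (shift_sol _ _ T HT H3).
  - pose proof (shift_sol _ _ T HT H4) as H. destruct i; exact H.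
Qed.

Lemma norm4_nonneg a b c d : 0 <= norm4 a b c d.
Proof. apply sqrt_pos. Qed.

Lemma ass_from_iss Kdp Kdv l1 l2 gdp gdv a b :
  iss_estimate Kdp Kdv l1 l2 gdp gdv a b (fun gam => 0 < gam < 1) ->
  asympt_string_stable Kdp Kdv l1 l2 gdp gdv a b.
Proof.
  intros [be [gam [[HK HL] [Hgam HE]]]].
  assert (Hmono : forall r r' t, 0 <= t -> 0 <= r -> r <= r' -> be r t <= be r' t).
  { intros r r' t Ht Hr Hrr. destruct (HK t Ht) as [_ [_ Hinc]].
    destruct (Req_dec r r') as [->|Hne]; [lra|]. left. apply Hinc; lra. }
  assert (Hdec : forall r s t, 0 <= r -> 0 <= s -> s <= t -> be r t <= be r s).
  { intros r s t Hr. apply (proj1 (HL r Hr)). }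
  assert (Hnn : forall r t, 0 <= t -> 0 <= r -> 0 <= be r t).
  { intros r t Ht Hr. destruct (HK t Ht) as [H0 _]. rewrite <- H0. apply Hmono; lra. }
  split.
  - intros eps Heps.
    destruct (HK 0 (Rle_refl 0)) as [H0 [Hc Hinc]].
    specialize (Hc 0 (Rle_refl 0)).
    pose proof (proj1 (@filterlim_locally _ _ _ (within_filter _ _ _ (@filter_filter _ _ (locally_filter (0:R)))) _ _) Hc) as Hc'.
    assert (Hep : 0 < eps * (1 - gam)) by (apply Rmult_lt_0_compat; lra).
    destruct (Hc' (mkposreal _ Hep)) as [d Hd].
    set (delta := d / 2).
    assert (Hdl : 0 < delta) by (unfold delta; destruct d; simpl; lra).
    assert (Hbd : be delta 0 < eps * (1 - gam)).
    { assert (Hb : ball 0 d delta).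
      { unfold ball; simpl; unfold AbsRing_ball, abs, minus, plus, opp; simpl.
        rewrite Rabs_pos_eq; unfold delta; destruct d; simpl in *; lra. }
      specialize (Hd delta Hb ltac:(lra)). revert Hd. simpl.
      unfold ball; simpl; unfold AbsRing_ball, abs, minus, plus, opp; simpl. rewrite H0.
      intro Hd. apply Rabs_lt_between in Hd. simpl in Hd. lra. }
    exists delta. split; auto.
    intros N x1 x2 x3 x4 Hp H0i.
    set (Q := be delta 0 / (1 - gam)).
    assert (HQ0 : 0 <= Q) by (unfold Q; apply Rdiv_le_0_compat; [apply Hnn; lra|lra]).
    assert (HQ : Q < eps).
    { unfold Q. apply (Rmult_lt_reg_r (1 - gam)). lra. unfold Rdiv. rewrite Rmult_assoc, Rinv_l by lra. lra. }
    assert (Hall : forall k i, (i < k)%nat -> (i <= N)%nat -> forall t, 0 <= t ->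
                     norm4 (x1 i t) (x2 i t) (x3 i t) (x4 i t) <= Q).
    { induction k as [|k IH]; intros i Hik HiN t Ht; [lia|].
      eapply Rle_trans. apply (HE N x1 x2 x3 x4 Hp i HiN t Ht Q HQ0).
      - intros j tau Hj Htau _. apply (IH j); lia || lra.
      - assert (be (norm4 (x1 i 0) (x2 i 0) (x3 i 0) (x4 i 0)) t <= be delta 0).
        { eapply Rle_trans. apply Hmono. lra. apply norm4_nonneg. left. apply H0i; lia.
          apply Hdec; lra. }
        assert (be delta 0 = Q * (1 - gam)) by (unfold Q; field; lra).
        nra. }
    intros i Hi t Ht. eapply Rle_lt_trans. apply (Hall (S i)); auto. exact HQ.
  - intros N x1 x2 x3 x4 Hp.
    assert (Bd : forall k, (k <= S N)%nat -> exists Q, 0 <= Q /\ forall j t, (j < k)%nat -> 0 <= t ->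
                   norm4 (x1 j t) (x2 j t) (x3 j t) (x4 j t) <= Q).
    { induction k as [|k IH]; intros Hk.
      - exists 0. split; [lra|]. intros; lia.
      - destruct IH as [Q [HQ HQb]]; [lia|].
        set (n0 := norm4 (x1 k 0) (x2 k 0) (x3 k 0) (x4 k 0)).
        exists (Rmax Q (be n0 0 + gam * Q)). split.
        + eapply Rle_trans; [exact HQ|apply Rmax_l].
        + intros j t Hj Ht. destruct (Nat.eq_dec j k) as [->|Hne].
          * eapply Rle_trans; [|apply Rmax_r].
            eapply Rle_trans. apply (HE N x1 x2 x3 x4 Hp k ltac:(lia) t Ht Q HQ).
            intros j tau Hj' Htau _. apply HQb; auto.
            assert (be n0 t <= be n0 0) by (apply Hdec; [apply norm4_nonneg|lra|lra]).
            unfold n0 in *. lra.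
          * eapply Rle_trans; [|apply Rmax_l]. apply HQb; auto. lia. }
    assert (Cv : forall k, (k <= S N)%nat -> forall eta, 0 < eta -> exists T, 0 < T /\
                   forall j tau, (j < k)%nat -> T <= tau -> norm4 (x1 j tau) (x2 j tau) (x3 j tau) (x4 j tau) <= eta).
    { induction k as [|k IH]; intros Hk eta Heta.
      - exists 1. split; [lra|]. intros; lia.
      - destruct (IH ltac:(lia) (eta / 2) ltac:(lra)) as [T1 [HT1 HT1b]].
        destruct (Bd (S k) Hk) as [Qb [HQb HQbb]].
        destruct (HL Qb HQb) as [_ Hlim].
        apply is_lim_spec in Hlim.
        assert (Heta2 : 0 < eta / 2) by lra.
        destruct (Hlim (mkposreal _ Heta2)) as [S0 HS0]. simpl in HS0.
        set (S := Rmax S0 0 + 1).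
        assert (HS : S0 < S /\ 0 < S) by (unfold S; pose proof (Rmax_l S0 0); pose proof (Rmax_r S0 0); lra).
        exists (T1 + S). split; [lra|].
        intros j tau Hj Htau. destruct (Nat.eq_dec j k) as [->|Hne].
        + pose proof (shift_platoon Kdp Kdv l1 l2 gdp gdv a b N x1 x2 x3 x4 T1 HT1 Hp) as Hsh.
          assert (Hs0 : 0 <= tau - T1) by lra.
          pose proof (HE N _ _ _ _ Hsh k ltac:(lia) (tau - T1) Hs0 (eta / 2) ltac:(lra)) as Hest.
          simpl in Hest. replace (T1 + (tau - T1)) with tau in Hest by ring.
          eapply Rle_trans. apply Hest.
          * intros j' tau' Hj' Htau' _. apply HT1b; auto. lra.
          * rewrite Rplus_0_r.
            assert (Hn : norm4 (x1 k T1) (x2 k T1) (x3 k T1) (x4 k T1) <= Qb) by (apply HQbb; lia || lra).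
            assert (be (norm4 (x1 k T1) (x2 k T1) (x3 k T1) (x4 k T1)) (tau - T1) <= be Qb (tau - T1))
              by (apply Hmono; [lra|apply norm4_nonneg|exact Hn]).
            assert (Hb2 : Rabs (be Qb (tau - T1) - 0) < eta / 2) by (apply HS0; lra).
            rewrite Rminus_0_r in Hb2. apply Rabs_lt_between in Hb2.
            assert (gam * (eta / 2) <= eta / 2) by nra. lra.
        + apply Rle_trans with (eta / 2); [|lra]. apply HT1b; [lia|lra]. }
    intros i Hi. apply is_lim_spec. intros eps. simpl.
    destruct eps as [eps Heps]. simpl.
    destruct (Cv (S i) ltac:(lia) (eps / 2) ltac:(lra)) as [T [HT HTb]].
    exists T. intros x Hx. rewrite Rminus_0_r, Rabs_pos_eq by apply norm4_nonneg.
    apply Rle_lt_trans with (eps / 2); [|lra]. apply HTb; [lia|lra].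
Qed.

Lemma sol_on_ext (f df dg : R -> R) : sol_on f df -> (forall t, df t = dg t) -> sol_on f dg.
Proof. intros [Hc Hd] He. split; auto. intros t Ht. eapply der_eq. apply Hd; auto. apply He. Qed.

Theorem theorem3 (Kdp Kdv l1 l2 gdp gdv : R)
  (hKdp : 0 < Kdp) (hKdv : 0 < Kdv) (hl1 : 0 < l1) (hl2 : 0 < l2)
  (hgdp : 0 < gdp) (hgdv : 0 < gdv) :
  (* (1) *)
  isolated_GES Kdp Kdv l1 l2 /\
  (* (2) *)
  (forall a b, 0 <= a -> 0 <= b ->
     iss_estimate Kdp Kdv l1 l2 gdp gdv a b (fun gam => 0 < gam)) /\
  (* (3) existence of suitable gains *)
  (exists a b, 0 <= a /\ 0 <= b /\ (a <> 0 \/ b <> 0) /\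
     iss_estimate Kdp Kdv l1 l2 gdp gdv a b (fun gam => 0 < gam < 1)) /\
  (* (3) for such gains: asymptotic string stability *)
  (forall a b, 0 <= a -> 0 <= b -> (a <> 0 \/ b <> 0) ->
     iss_estimate Kdp Kdv l1 l2 gdp gdv a b (fun gam => 0 < gam < 1) ->
     asympt_string_stable Kdp Kdv l1 l2 gdp gdv a b).
Proof.
  pose proof (AC_pos Kdp Kdv l1 l2 hl1 hl2 hKdp hKdv) as HA.
  pose proof (BC_pos Kdp Kdv l1 l2 hl1 hl2 hKdp hKdv) as HB.
  destruct (muC_facts Kdp Kdv l1 l2 hKdp hKdv hl1 hl2) as [Hmu _].
  assert (HKL : classKL (beC (AC Kdp Kdv l1 l2) (muC Kdp Kdv l1 l2 / 2))) by (apply beC_KL; lra).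
  split; [|split; [|split]].
  - exists (AC Kdp Kdv l1 l2), (muC Kdp Kdv l1 l2 / 2). split; [lra|split; [lra|]].
    intros z1 z2 z3 z4 [H1 [H2 [H3 H4]]] t Ht.
    assert (H4' : sol_on z4 (fun t => - l2 * z4 t + (fun _ : R => 0) t)).
    { apply (sol_on_ext _ _ _ H4). intros; simpl; ring. }
    pose proof (core_norm Kdp Kdv l1 l2 z1 z2 z3 z4 (fun _ => 0) 0 t hKdp hKdv hl1 hl2 H1 H2 H3 H4'
                  (Rle_refl 0) Ht) as H.
    rewrite Rmult_0_r, Rplus_0_r in H. apply H.
    intros; rewrite Rabs_R0; lra.
  - intros a b Ha Hb. exists (beC (AC Kdp Kdv l1 l2) (muC Kdp Kdv l1 l2 / 2)),
      (2 * BC Kdp Kdv l1 l2 * (a * gdp + b * gdv) + 1).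
    assert (0 <= a * gdp + b * gdv) by nra.
    split; [exact HKL|split].
    + assert (0 <= 2 * BC Kdp Kdv l1 l2 * (a * gdp + b * gdv)) by (apply Rmult_le_pos; lra). lra.
    + apply iss_core; auto; lra.
  - exists (1 / (4 * BC Kdp Kdv l1 l2 * gdp)), 0.
    assert (Ha : 0 < 1 / (4 * BC Kdp Kdv l1 l2 * gdp)) by (apply Rdiv_lt_0_compat; nra).
    split; [lra|split; [lra|split; [left; lra|]]].
    exists (beC (AC Kdp Kdv l1 l2) (muC Kdp Kdv l1 l2 / 2)), (1 / 2).
    split; [exact HKL|split; [lra|]].
    apply iss_core; auto; try lra.
    replace (2 * BC Kdp Kdv l1 l2 * (1 / (4 * BC Kdp Kdv l1 l2 * gdp) * gdp + 0 * gdv)) with (1 / 2)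
      by (field; lra). lra.
  - intros a b _ _ _ H. apply ass_from_iss; exact H.
Qed.
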